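(* Let $E,A\in\mathbb{R}^{n\times n}$ with $A$ nonsingular and let $\mathcal{C}=\mathcal{C}(E,A)$ be the consistency space of $(E,A)$. A symmetric matrix $P\in\mathbb{R}^{n\times n}$ is a Lyapunov matrix for $(E,A)$ if and only if $x^TPx>0$ for all nonzero $x\in\mathcal{C}$ and $x^T\big(PA^{-1}E+E^TA^{-T}P\big)x<0$ for all nonzero $x\in\mathcal{C}$.
   Context: For $E,A\in\mathbb{R}^{n\times n}$ with $A$ nonsingular, $(E,A)$ denotes the linear descriptor system $E\dot x=Ax$. Its index is the smallest integer $k^*\ge 0$ with $\mathrm{Im}((A^{-1}E)^{k^*+1})=\mathrm{Im}((A^{-1}E)^{k^*})$, and its consistency space is $\mathcal{C}(E,A)=\mathrm{Im}((A^{-1}E)^{k^*})$ (the set of initial states from which the system has a continuous solution). If $\mathcal{C}\neq\{0\}$, the map $A^{-1}E$ maps $\mathcal{C}$ bijectively onto itself; letting $\tilde A$ be the inverse of its restriction to $\mathcal{C}$, the system restricted to $\mathcal{C}$ is equivalent to $\dot x=\tilde Ax$, $x\in\mathcal{C}$. A symmetric matrix $P$ is a Lyapunov matrix for $(E,A)$ if the function $V(x)=x^TPx$ is positive on $\mathcal{C}\setminus\{0\}$ and its derivative along solutions, $\dot V=2x^TP\dot x$ with $\dot x=\tilde A x$, is negative at every nonzero state $x\in\mathcal{C}$. *)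

(* Defs.v *)
From HB Require Import structures.
From mathcomp Require Import all_boot all_order all_algebra.
Set Implicit Arguments. Unset Strict Implicit. Unset Printing Implicit Defensive.
Import Order.TTheory GRing.Theory Num.Theory.
Local Open Scope ring_scope.

Definition in_image (R : fieldType) (n : nat) (B : 'M[R]_n) (x : 'cV[R]_n) : Prop :=
  exists y : 'cV[R]_n, x = B *m y.

Definition AinvE (R : fieldType) (n : nat) (E A : 'M[R]_n) : 'M[R]_n := invmx A *m E.

(* Im(M^(k+1)) = Im(M^k), as equality of column spaces (= row spaces of transposes). *)
Definition img_stable (R : fieldType) (n : nat) (M : 'M[R]_n) (k : nat) : bool :=
  (((M ^+ k.+1)^T) == ((M ^+ k)^T))%MS.

(* Index: smallest k >= 0 with Im(M^(k+1)) = Im(M^k).  Such k always exists and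
   is <= n (ranks of M^k are nonincreasing), so searching 0..n finds the minimum. *)
Definition dae_index (R : fieldType) (n : nat) (E A : 'M[R]_n) : nat :=
  find (img_stable (AinvE E A)) (iota 0 n.+1).

Definition consistency_space (R : fieldType) (n : nat) (E A : 'M[R]_n) (x : 'cV[R]_n) : Prop :=
  in_image ((AinvE E A) ^+ (dae_index E A)) x.

Definition qf (R : fieldType) (n : nat) (x : 'cV[R]_n) (Q : 'M[R]_n) (y : 'cV[R]_n) : R :=
  (x^T *m Q *m y) 0 0.

(* Lyapunov matrix: V(x) = x^T P x positive on C\{0}, and
   dV/dt = 2 x^T P (Atilde x) < 0 for nonzero x in C, where Atilde x is the
   (unique, by bijectivity of A^{-1}E on C) vector xd in C with A^{-1}E xd = x. *)
Definition lyapunov_matrix (R : realFieldType) (n : nat) (E A P : 'M[R]_n) : Prop :=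
  P^T = P /\
  (forall x : 'cV[R]_n, consistency_space E A x -> x != 0 -> 0 < qf x P x) /\
  (forall x xd : 'cV[R]_n, consistency_space E A x -> x != 0 ->
     consistency_space E A xd -> AinvE E A *m xd = x ->
     2 * qf x P xd < 0).

(* Main.v *)
Require Import Defs.
From HB Require Import structures.
From mathcomp Require Import all_boot all_order all_algebra.
Import Order.TTheory GRing.Theory Num.Theory.
Local Open Scope ring_scope.

Section Aux.
Variables (F : fieldType) (n : nat) (M : 'M[F]_n).

Lemma powS_mx j : M ^+ j.+1 = M *m M ^+ j.
Proof. by rewrite exprS mulmxE. Qed.

Lemma img_sub j : (((M ^+ j.+1)^T) <= ((M ^+ j)^T))%MS.
Proof. by rewrite exprSr -mulmxE trmx_mul; apply: submxMl. Qed.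

Lemma rank_bound j : (forall i, (i < j)%N -> ~~ img_stable M i) ->
  (\rank ((M ^+ j)^T) + j <= n)%N.
Proof.
elim: j => [|j IH] H; first by rewrite addn0 rank_leq_row.
have IH' := IH (fun i hi => H i (ltnW hi)).
have Hj := H j (ltnSn j).
have := mxrank_leqif_eq (img_sub j).
move=> [Hle Heq]. rewrite /img_stable in Hj.
have Hlt : (\rank ((M ^+ j.+1)^T) < \rank ((M ^+ j)^T))%N.
  by rewrite ltn_neqAle Hle andbT Heq.
rewrite addnS; apply: leq_trans IH'; by rewrite ltn_add2r.
Qed.

Lemma exists_stable : has (img_stable M) (iota 0 n.+1).
Proof.
apply/negPn/negP => /hasPn Hn.
have H : (\rank ((M ^+ n.+1)^T) + n.+1 <= n)%N.
  by apply: rank_bound => i hi; apply: Hn; rewrite mem_iota add0n.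
by move: H; rewrite addnS ltnNge leq_addl.
Qed.

Lemma find_stable : img_stable M (find (img_stable M) (iota 0 n.+1)).
Proof.
have H := exists_stable.
have := nth_find 0%N H. rewrite nth_iota ?add0n //.
by move: H; rewrite has_find size_iota.
Qed.

Lemma inj_on k : img_stable M k -> forall z : 'cV[F]_n,
  M *m (M ^+ k *m z) = 0 -> M ^+ k *m z = 0.
Proof.
move=> Hs z Hz.
have Hsub : (kermx ((M ^+ k)^T) <= kermx ((M ^+ k.+1)^T))%MS.
  apply/sub_kermxP.
  by rewrite exprS -mulmxE trmx_mul mulmxA mulmx_ker mul0mx.
have Hrk : (\rank (kermx ((M ^+ k.+1)^T)) <= \rank (kermx ((M ^+ k)^T)))%N.
  by rewrite !mxrank_ker (eqmx_rank Hs).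
have [_ Heq] := mxrank_leqif_eq Hsub.
have Heqb : (kermx ((M ^+ k)^T) == kermx ((M ^+ k.+1)^T))%MS.
  by rewrite -Heq eqn_leq Hrk mxrankS.
have Hz1 : (z^T <= kermx ((M ^+ k.+1)^T))%MS.
  by apply/sub_kermxP; rewrite -trmx_mul exprS -mulmxE -mulmxA Hz trmx0.
have Hz0 : (z^T <= kermx ((M ^+ k)^T))%MS.
  apply: submx_trans Hz1 _. by case/andP: Heqb.
move/sub_kermxP: Hz0. rewrite -trmx_mul => /eqP.
by rewrite -trmx0 (inj_eq trmx_inj) => /eqP.
Qed.
End Aux.

Lemma qf_sym (R : realFieldType) (n : nat) (P : 'M[R]_n) (u v : 'cV[R]_n) :
  P^T = P -> qf u P v = qf v P u.
Proof.
move=> hP; rewrite /qf.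
have -> : (u^T *m P *m v) 0 0 = ((u^T *m P *m v)^T) 0 0 by rewrite [RHS]mxE.
by rewrite !trmx_mul trmxK hP mulmxA.
Qed.

Lemma add00 (R : realFieldType) (U V : 'M[R]_1) : (U + V) 0 0 = U 0 0 + V 0 0.
Proof. by rewrite mxE. Qed.

Lemma qf_key (R : realFieldType) (n : nat) (E A P : 'M[R]_n) (x : 'cV[R]_n) :
  P^T = P ->
  qf x (P *m invmx A *m E + E^T *m (invmx A)^T *m P) x = 2 * qf x P (AinvE E A *m x).
Proof.
move=> hP.
have -> : E^T *m (invmx A)^T = (AinvE E A)^T by rewrite /AinvE trmx_mul.
rewrite -mulmxA -/(AinvE E A).
rewrite /qf mulmxDr mulmxDl add00.
have -> : x^T *m ((AinvE E A)^T *m P) *m x = (AinvE E A *m x)^T *m P *m x.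
  by rewrite [(AinvE E A *m x)^T]trmx_mul !mulmxA.

rewrite -[((AinvE E A *m x)^T *m P *m x) 0 0]/(qf (AinvE E A *m x) P x) (@qf_sym _ _ _ _ _ hP) /qf !mulmxA.
by rewrite mulr2n mulrDl mul1r.
Qed.

Theorem lemma1 (R : realFieldType) (n : nat) (E A P : 'M[R]_n)
  (hA : A \in unitmx) (hP : P^T = P) :
  lyapunov_matrix E A P <->
  ((forall x : 'cV[R]_n, consistency_space E A x -> x != 0 -> 0 < qf x P x) /\
   (forall x : 'cV[R]_n, consistency_space E A x -> x != 0 ->
      qf x (P *m invmx A *m E + E^T *m (invmx A)^T *m P) x < 0)).
Proof.
set M := AinvE E A.
have Hst : img_stable M (dae_index E A) := @find_stable _ _ M.
split.
- move=> [_ [Hpos Hneg]]; split => // x [w ->] Hx.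
  rewrite qf_key //.
  have Hy : consistency_space E A (M *m (M ^+ dae_index E A *m w)).
    exists (M *m w); by rewrite !mulmxA; congr (_ *m w); rewrite -mulmxA -/(AinvE E A) -/M mulmxE -exprS -exprSr.
  have Hy0 : M *m (M ^+ dae_index E A *m w) != 0.
    apply: contra Hx => /eqP H; apply/eqP; exact: (@inj_on _ _ M _ Hst _ H).
  have := Hneg _ _ Hy Hy0 (ex_intro _ w erefl) erefl.
  by rewrite (@qf_sym _ _ _ _ _ hP).
- move=> [Hpos Hneg]; split => //; split => // x xd Hx Hx0 Hxd Hdx.
  have Hxd0 : xd != 0.
    apply: contra Hx0 => /eqP H; by rewrite -Hdx H mulmx0.
  have := Hneg _ Hxd Hxd0. rewrite qf_key // -/M Hdx.
  by rewrite (@qf_sym _ _ _ _ _ hP).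
Qed.
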